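(* Let $\mathcal C\subseteq 2^{[n]}$ be an inductively pierced code, suppose the largest clique in $G(\mathcal C)$ has size $k+1$, and suppose $\mathcal C$ has a well-formed realization by open balls in $\mathbb R^k$. Then $\mathcal C$ is splittable.
   Context: A code is a set $\mathcal C\subseteq 2^{[n]}$, $[n]=\{1,\dots,n\}$. Standing conventions: $\emptyset\in\mathcal C$; every neuron lies in some codeword; no two distinct neurons lie in exactly the same codewords. $\mathcal C\setminus i$ is obtained by removing $i$ from every codeword. For $\alpha\subseteq\beta$, $[\alpha,\beta]=\{\gamma:\alpha\subseteq\gamma\subseteq\beta\}$, of rank $|\beta\setminus\alpha|$. A neuron $i$ is a $k$-piercing of $\mathcal C$ if there are $\sigma\subseteq\tau\subseteq[n]\setminus\{i\}$ with $[\sigma,\tau]$ of rank $k$, $[\sigma,\tau]\subseteq\mathcal C\setminus i$, and $\mathcal C=(\mathcal C\setminus i)\cup[\sigma\cup\{i\},\tau\cup\{i\}]$. A code is $k$-inductively pierced if $\mathcal C=\{\emptyset\}$, or some neuron $i$ is a $k'$-piercing for some $k'\le k$ and $\mathcal C\setminus i$ is $k$-inductively pierced; inductively pierced means $k$-inductively pierced for some $k$. A pseudo-monomial is $\prod_{a\in\alpha}x_a\prod_{b\in\beta}(1-x_b)\in\mathbb F_2[x_1,\dots,x_n]$ with $\alpha\cap\beta=\emptyset$, ordered by divisibility; $J_\mathcal C=\langle\rho_\gamma:\gamma\notin\mathcal C\rangle$ with $\rho_\gamma=\prod_{a\in\gamma}x_a\prod_{b\notin\gamma}(1-x_b)$,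 and $\mathrm{CF}(J_\mathcal C)$ is its set of minimal pseudo-monomials (for inductively pierced codes all have degree two). $G(\mathcal C)$ is the graph on $[n]$ with edge $ab$ whenever $\mathrm{CF}(J_\mathcal C)$ contains no pseudo-monomial in the variables $x_a,x_b$; $P(\mathcal C)$ is the partial order with $a<b$ iff $x_a(1-x_b)\in\mathrm{CF}(J_\mathcal C)$. If the largest clique of $G(\mathcal C)$ has size $k+1$, the attaching set of a $k$-element clique $\sigma$ is the set of $i\notin\sigma$ adjacent to all of $\sigma$; $\mathcal C$ is splittable if for each such $\sigma$ the attaching set can be partitioned as $A\sqcup B$ such that $P(\mathcal C)$ restricted to the attaching set is a total order on $A$, a total order on $B$, with no element of $A$ comparable to an element of $B$. Sets $U_1,\dots,U_n\subseteq\mathbb R^d$ realize $\mathcal C$ if $\mathcal C=\{\gamma:\bigcap_{i\in\gamma}U_i\setminus\bigcup_{j\notin\gamma}U_j\ne\emptyset\}$. A collection of $(d-1)$-spheres in $\mathbb R^d$ is well-formed if for every $m\le d$ the intersection of any $m$ of them is empty or a $(d-m)$-dimensional sphere, and the intersection of any $d+1$ of them is empty; open balls are well-formed if their boundary spheres are. *)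

(* Defs.v *)
From HB Require Import structures.
From mathcomp Require Import all_boot all_order all_algebra.
From mathcomp Require Import Rstruct.
From mathcomp Require Import mpoly.
From Stdlib Require Import Rdefinitions.
Set Implicit Arguments. Unset Strict Implicit. Unset Printing Implicit Defensive.
Import Order.TTheory GRing.Theory Num.Theory.

Local Open Scope ring_scope.

Section Codes.
Variable n : nat.

Definition code := {set {set 'I_n}}.

Definition code_conventions (C : code) : Prop :=
  [/\ set0 \in C,
      (forall i : 'I_n, exists2 c, c \in C & i \in c) &
      (forall i j : 'I_n, (forall c, c \in C -> (i \in c) = (j \in c)) -> i = j)].

(** C \ i : remove i from every codeword (i then simply never fires). *)
Definition delete (C : code) (i : 'I_n) : code := [set c :\ i | c in C].

Definition interval (a b : {set 'I_n}) : code := [set g : {set 'I_n} | (a \subset g) && (g \subset b)].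

Definition piercing (C : code) (i : 'I_n) (k : nat) : Prop :=
  exists sigma tau : {set 'I_n},
    [/\ sigma \subset tau, i \notin tau, #|tau :\: sigma|%N = k,
        interval sigma tau \subset delete C i &
        C = delete C i :|: interval (i |: sigma) (i |: tau)].

Inductive k_ind_pierced (k : nat) : code -> Prop :=
| kip_base : k_ind_pierced k [set set0]
| kip_step (C : code) (i : 'I_n) (k' : nat) :
    leq k' k -> piercing C i k' -> k_ind_pierced k (delete C i) ->
    k_ind_pierced k C.

Definition ind_pierced (C : code) : Prop := exists k, k_ind_pierced k C.

Definition poly := {mpoly 'F_2[n]}.

Definition pmono (a b : {set 'I_n}) : poly :=
  (\prod_(i in a) 'X_i) * \prod_(j in b) (1 - 'X_j).

Definition is_pseudo_monomial (f : poly) : Prop :=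
  exists a b : {set 'I_n}, [disjoint a & b] /\ f = pmono a b.

Definition rho (g : {set 'I_n}) : poly := pmono g (~: g).

Definition in_neural_ideal (C : code) (f : poly) : Prop :=
  exists h : {set 'I_n} -> poly, f = \sum_(g in ~: C) h g * rho g.

Definition mdivides (f g : poly) : Prop := exists h : poly, g = f * h.

Definition in_CF (C : code) (f : poly) : Prop :=
  [/\ is_pseudo_monomial f, in_neural_ideal C f &
      forall g, is_pseudo_monomial g -> in_neural_ideal C g ->
                mdivides g f -> mdivides f g].

Definition Gedge (C : code) (a b : 'I_n) : Prop :=
  a != b /\
  ~ (exists a' b' : {set 'I_n},
        [disjoint a' & b'] /\ (a' :|: b' \subset [set a; b]) /\ in_CF C (pmono a' b')).

Definition clique (C : code) (s : {set 'I_n}) : Prop :=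
  forall a b, a \in s -> b \in s -> a != b -> Gedge C a b.

Definition max_clique_size (C : code) (m : nat) : Prop :=
  (exists2 s, clique C s & #|s| = m) /\ (forall s, clique C s -> leq #|s| m).

Definition Plt (C : code) (a b : 'I_n) : Prop :=
  a != b /\ in_CF C (pmono [set a] [set b]).

Definition Pcomparable (C : code) (a b : 'I_n) : Prop := Plt C a b \/ Plt C b a.

Definition attaching_set (C : code) (s : {set 'I_n}) (i : 'I_n) : Prop :=
  i \notin s /\ forall j, j \in s -> Gedge C i j.

(** splittable, for a code whose largest clique has size k+1 *)
Definition splittable (k : nat) (C : code) : Prop :=
  forall s : {set 'I_n}, clique C s -> #|s| = k ->
    exists A B : {set 'I_n},
      [/\ (forall i, attaching_set C s i <-> i \in A :|: B),
          [disjoint A & B],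
          (forall a a', a \in A -> a' \in A -> a != a' -> Pcomparable C a a'),
          (forall b b', b \in B -> b' \in B -> b != b' -> Pcomparable C b b') &
          (forall a b, a \in A -> b \in B -> ~ Pcomparable C a b)].

End Codes.

Section Geometry.
Variable d : nat.
Local Notation pt := 'rV[R]_d.

Definition sqdist (x y : pt) : R := \sum_(j < d) (x 0 j - y 0 j) ^+ 2.

Definition open_ball (c : pt) (r : R) : pt -> Prop := fun x => sqdist x c < r ^+ 2.

Definition sphere (c : pt) (r : R) : pt -> Prop := fun x => sqdist x c = r ^+ 2.

(** an m-dimensional sphere in R^d: the points at distance r > 0 from c
    lying in the (m+1)-dimensional affine subspace c + rowspace V *)
Definition is_dim_sphere (m : nat) (S : pt -> Prop) : Prop :=
  exists (c : pt) (r : R) (V : 'M[R]_(m.+1, d)),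
    [/\ 0 < r, \rank V = m.+1 &
        forall x, S x <-> ((x - c <= V)%MS /\ sqdist x c = r ^+ 2)].

Definition well_formed_balls (n : nat) (c : 'I_n -> pt) (r : 'I_n -> R) : Prop :=
  (forall T : {set 'I_n}, leq 1 #|T| && leq #|T| d ->
     (forall x, ~ (forall i, i \in T -> sphere (c i) (r i) x)) \/
     is_dim_sphere (subn d #|T|) (fun x => forall i, i \in T -> sphere (c i) (r i) x)) /\
  (forall T : {set 'I_n}, #|T| = d.+1 ->
     forall x, ~ (forall i, i \in T -> sphere (c i) (r i) x)).

Definition realizes (n : nat) (U : 'I_n -> pt -> Prop) (C : code n) : Prop :=
  forall g : {set 'I_n}, g \in C <->
    exists x, (forall i, i \in g -> U i x) /\ (forall j, j \notin g -> ~ U j x).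

Definition has_wf_ball_realization (n : nat) (C : code n) : Prop :=
  exists (c : 'I_n -> pt) (r : 'I_n -> R),
    (forall i, 0 < r i) /\ well_formed_balls c r /\
    realizes (fun i => open_ball (c i) (r i)) C.

End Geometry.

(* Main.v *)
Require Import Defs.
From HB Require Import structures.
From mathcomp Require Import all_boot all_order all_algebra.
From mathcomp Require Import Rstruct.
From mathcomp Require Import mpoly.
From Stdlib Require Import Rdefinitions.
Set Implicit Arguments. Unset Strict Implicit. Unset Printing Implicit Defensive.
Import Order.TTheory GRing.Theory Num.Theory.
Local Open Scope ring_scope.

Definition ind (n : nat) (c : {set 'I_n}) : 'I_n -> 'F_2 := fun j => (j \in c)%:R.

Lemma disjP (T : finType) (A B : {set T}) :
  reflect (forall x, x \in A -> x \in B -> False) [disjoint A & B].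
Proof.
rewrite -setI_eq0; apply: (iffP idP).
  move/eqP=> H x xA xB; have : x \in A :&: B by rewrite inE xA xB.
  by rewrite H inE.
move=> H; apply/eqP/setP=> x; rewrite !inE; apply/negP=> /andP[xA xB].
exact: (H x xA xB).
Qed.

Lemma F2_10 : (1 : 'F_2) != 0. Proof. exact: oner_neq0. Qed.

Lemma eval_prodX n (a c : {set 'I_n}) :
  (\prod_(i in a) 'X_i : Defs.poly n).@[ind c] = (a \subset c)%:R.
Proof.
rewrite rmorph_prod /=; under eq_bigr do rewrite mevalXU.
case: (boolP (a \subset c)) => H.
  by apply: big1 => i ia; rewrite /ind (subsetP H i ia).
case/subsetPn: H => i ia ic.
by rewrite (bigD1 i) //= /ind (negbTE ic) mul0r.
Qed.

Lemma eval_prod1X n (b c : {set 'I_n}) :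
  (\prod_(j in b) (1 - 'X_j) : Defs.poly n).@[ind c] = [disjoint b & c]%:R.
Proof.
rewrite rmorph_prod /=; under eq_bigr do rewrite mevalB meval1 mevalXU.
case: (boolP [disjoint b & c]) => H.
  apply: big1 => i ib; rewrite /ind.
  by rewrite (disjointFr H ib) subr0.
move: H; rewrite -setI_eq0 => /set0Pn [i]; rewrite inE => /andP[ib ic].
by rewrite (bigD1 i) //= /ind ic subrr mul0r.
Qed.

Lemma eval_pmono n (a b c : {set 'I_n}) :
  (pmono a b).@[ind c] = ((a \subset c) && [disjoint b & c])%:R.
Proof.
rewrite /pmono rmorphM /= eval_prodX eval_prod1X.
by case: (a \subset c); case: [disjoint b & c]; rewrite ?mul1r ?mul0r.
Qed.

Lemma rho_eval n (g c : {set 'I_n}) : (rho g).@[ind c] = (g == c)%:R.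
Proof.
by rewrite /rho eval_pmono disjoints_subset setCS eqEsubset.
Qed.

Lemma J_eval n (C : code n) f c :
  in_neural_ideal C f -> c \in C -> f.@[ind c] = 0.
Proof.
case=> h -> cC; rewrite rmorph_sum /=; apply: big1 => g gC.
rewrite rmorphM /= rho_eval.
have -> : (g == c) = false.
  by apply/eqP=> E; move: gC; rewrite inE E cC.
by rewrite mulr0.
Qed.

Definition BE n (C : code n) (a b : {set 'I_n}) : Prop :=
  forall c, c \in C -> ~~ ((a \subset c) && [disjoint b & c]).

Lemma pmono_J_BE n (C : code n) a b :
  in_neural_ideal C (pmono a b) -> BE C a b.
Proof.
move=> HJ c cC; apply/negP => H.
have := J_eval HJ cC; rewrite eval_pmono H => /eqP; exact/negP/F2_10.
Qed.

Lemma pmono_prod n (a b : {set 'I_n}) : pmono a b =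
  \prod_i ((if i \in a then 'X_i else 1) * (if i \in b then 1 - 'X_i else 1)).
Proof. by rewrite /pmono big_split /= -!big_mkcond. Qed.

Definition Gx n (i : 'I_n) (x : bool) : Defs.poly n := if x then 'X_i else 1 - 'X_i.

Lemma rho_prod n (g : {set 'I_n}) : rho g = \prod_i Gx i (i \in g).
Proof.
rewrite /rho pmono_prod; apply: eq_bigr => i _; rewrite /Gx inE.
by case: (i \in g); rewrite ?mulr1 ?mul1r.
Qed.

Lemma pmono_sum n (a b : {set 'I_n}) : [disjoint a & b] ->
  pmono a b = \sum_(g : {set 'I_n} | (a \subset g) && [disjoint b & g]) rho g.
Proof.
move=> dab.
pose Q := fun (i : 'I_n) (x : bool) => if i \in a then x else if i \in b then ~~ x else true.
have E1 : pmono a b = \prod_i \sum_(x : bool | Q i x) Gx i x.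
  rewrite pmono_prod; apply: eq_bigr => i _; rewrite big_mkcond big_bool /= /Q /Gx.
  case ia: (i \in a); case ib: (i \in b) => /=.
  - by rewrite (disjointFr dab ia) in ib.
  - by rewrite mulr1 addr0.
  - by rewrite mul1r add0r.
  - by rewrite mulr1 addrC subrK.
rewrite E1 bigA_distr_big_dep /=.
rewrite (reindex (fun g : {set 'I_n} => [ffun i => i \in g])); last first.
  exists (fun f : {ffun 'I_n -> bool} => [set i | f i]) => g _.
    by apply/setP => i; rewrite inE ffunE.
  by apply/ffunP => i; rewrite ffunE inE.
apply: eq_big => [g|g _]; last first.
  by rewrite rho_prod; apply: eq_bigr => i _; rewrite ffunE.
apply/familyP/andP => [H|[H1 H2] i]; last first.
  rewrite ffunE /Q unfold_in /=.
  case ia: (i \in a); first by rewrite (subsetP H1 i ia).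
  case ib: (i \in b) => //; by rewrite (disjointFr H2 ib).
split.
  apply/subsetP => i ia; have := H i; by rewrite ffunE /Q unfold_in /= ia.
apply/disjP => i ib ig; have := H i; rewrite ffunE /Q unfold_in /= ib ig.
by rewrite (disjointFl dab ib).
Qed.

Lemma BE_pmono_J n (C : code n) (a b : {set 'I_n}) :
  [disjoint a & b] -> BE C a b -> in_neural_ideal C (pmono a b).
Proof.
move=> dab HB; rewrite /in_neural_ideal.
exists (fun g : {set 'I_n} => if (a \subset g) && [disjoint b & g] then (1 : Defs.poly n) else 0).
rewrite pmono_sum // big_mkcond /= [RHS]big_mkcond /=.
apply: eq_bigr => g _; rewrite inE.
case: (boolP ((a \subset g) && [disjoint b & g])) => H.
  case gC: (g \in C); first by have := HB g gC; rewrite H.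
  by rewrite mul1r.
by case: (g \notin C); rewrite ?mul0r.
Qed.

Lemma pmono_div n (a b a' b' : {set 'I_n}) : [disjoint a' & b'] ->
  mdivides (pmono a b) (pmono a' b') -> a \subset a' /\ b \subset b'.
Proof.
move=> d' [h E].
have key : forall c, (pmono a' b').@[ind c] = (pmono a b).@[ind c] * h.@[ind c].
  by move=> c; rewrite E rmorphM.
split.
  apply/subsetP => i ia; apply/negPn/negP => ia'.
  have := key a'; rewrite !eval_pmono subxx disjoint_sym d' /=.
  have -> : (a \subset a') = false.
    by apply/negP => /subsetP /(_ i ia); rewrite (negbTE ia').
  by rewrite mul0r => /eqP; apply/negP/F2_10.
apply/subsetP => j jb; apply/negPn/negP => jb'.
have := key (j |: a'); rewrite !eval_pmono subsetU1 /=.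
have -> : [disjoint b' & j |: a'].
  apply/disjP => x xb'; rewrite inE => /orP[xj|xa'].
    by move: xj; rewrite inE => /eqP xj; subst x; rewrite xb' in jb'.
  by rewrite (disjointFr d' xa') in xb'.
have -> : [disjoint b & j |: a'] = false.
  by apply/negP => /disjP /(_ j jb); rewrite setU11; apply.
by rewrite andbF mul0r => /eqP; apply/negP/F2_10.
Qed.

Lemma pmono_split n (a b a' b' : {set 'I_n}) : a' \subset a -> b' \subset b ->
  pmono a b = pmono a' b' * pmono (a :\: a') (b :\: b').
Proof.
move=> sa sb; rewrite /pmono [\prod_(i in a) _](big_setID a') [\prod_(i in b) _](big_setID b') /=.
rewrite (setIidPr sa) (setIidPr sb).
by rewrite mulrACA.
Qed.

Lemma CF_char n (C : code n) (a b : {set 'I_n}) : [disjoint a & b] ->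
  in_CF C (pmono a b) <->
  (BE C a b /\ forall a' b' : {set 'I_n}, a' \subset a -> b' \subset b -> BE C a' b' -> a' = a /\ b' = b).
Proof.
move=> dab; split.
  case=> _ HJ Hmin; split; first exact: pmono_J_BE.
  move=> a' b' sa sb HB.
  have d' : [disjoint a' & b'].
    by apply: disjointWl sa _; apply: disjointWr sb _.
  have := Hmin (pmono a' b'); case.
  - by exists a', b'.
  - exact: BE_pmono_J.
  - by exists (pmono (a :\: a') (b :\: b')); apply: pmono_split.
  move=> h Eh; have [s1 s2] := pmono_div d' (ex_intro _ h Eh).
  by split; apply/eqP; rewrite eqEsubset ?sa ?sb ?s1 ?s2.
case=> HB Hmin; split.
- by exists a, b.
- exact: BE_pmono_J.
move=> g [a' [b' [d' ->]]] HJ Hd.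
have [s1 s2] := pmono_div dab Hd.
have [-> ->] := Hmin a' b' s1 s2 (pmono_J_BE HJ).
by exists 1; rewrite mulr1.
Qed.

Lemma Gedge_sym n (C : code n) x y : Gedge C x y -> Gedge C y x.
Proof.
case=> nxy H; split; first by rewrite eq_sym.
move=> [a' [b' [d [s cf]]]]; apply: H; exists a', b'; split=> //; split=> //.
by apply: subset_trans s _; apply/subsetP => z; rewrite !inE orbC.
Qed.

Lemma BE_delete n (C : code n) i (a b : {set 'I_n}) : i \notin a -> i \notin b ->
  BE (delete C i) a b <-> BE C a b.
Proof.
move=> ia ib; rewrite /BE; split=> H c cC; apply/negP => /andP[sa db].
  have : c :\ i \in delete C i by apply: imset_f.
  move/H; rewrite subsetD1 sa ia /=; apply/negP/negPn.
  by apply: disjointWr db; apply: subD1set.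
move: cC => /imsetP [c' c'C ->] in sa db.
have := H c' c'C; rewrite (subset_trans sa (subD1set _ _)) /=.
apply/negP/negPn/disjP => x xb xc'; move/disjP: db; apply; first exact: xb.
rewrite in_setD1 xc' andbT; apply/eqP => exi; subst x.
by rewrite xb in ib.
Qed.

Lemma CF_delete n (C : code n) i (a b : {set 'I_n}) : i \notin a -> i \notin b ->
  [disjoint a & b] ->
  in_CF (delete C i) (pmono a b) <-> in_CF C (pmono a b).
Proof.
move=> ia ib dab; rewrite !CF_char // BE_delete //.
have ns : forall s t : {set 'I_n}, s \subset t -> i \notin t -> i \notin s.
  by move=> s t st it; apply/negP => /(subsetP st); apply/negP.
split=> [[H1 H2]|[H1 H2]]; split=> // a' b' s1 s2 HB; apply: H2 => //.
- by rewrite BE_delete //; first [exact: ns s1 ia | exact: ns s2 ib].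
- by move: HB; rewrite BE_delete //; first [exact: ns s1 ia | exact: ns s2 ib].
Qed.

Lemma Gedge_delete n (C : code n) i x y : x != i -> y != i ->
  Gedge C x y -> Gedge (delete C i) x y.
Proof.
move=> xi yi [nxy H]; split=> // [[a' [b' [d [s cf]]]]]; apply: H.
exists a', b'; split=> //; split=> //.
have ni : forall z, z \in a' :|: b' -> z != i.
  move=> z /(subsetP s); rewrite !inE => /orP[] /eqP -> //.
have ia' : i \notin a'.
  by apply/negP => H; have := ni i; rewrite inE H eqxx => /(_ isT).
have ib' : i \notin b'.
  by apply/negP => H; have := ni i; rewrite inE H orbT eqxx => /(_ isT).
by apply/(@CF_delete _ C i a' b' ia' ib' d).
Qed.

Lemma kip_nil n k (C : code n) : k_ind_pierced k C -> set0 \in C.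
Proof.
elim => [|C0 i k' _ [sg [tau [_ _ _ _ E]]] _ IH]; first by rewrite inE.
rewrite E inE; apply/orP; left; exact: IH.
Qed.

Lemma disj0 n (c : {set 'I_n}) : [disjoint set0 & c].
Proof. by apply/disjP => x; rewrite inE. Qed.

Lemma BE_witness n (C : code n) (a b c : {set 'I_n}) :
  c \in C -> a \subset c -> [disjoint b & c] -> ~ BE C a b.
Proof. by move=> cC ac bc H; have := H c cC; rewrite ac bc. Qed.

Lemma kip_venn n k (C : code n) : k_ind_pierced k C -> forall K : {set 'I_n},
  clique C K -> (forall j, j \in K -> exists2 c, c \in C & j \in c) ->
  forall S : {set 'I_n}, S \subset K -> exists2 c, c \in C & c :&: K = S.
Proof.
move=> HC; have nil := kip_nil HC; move: HC nil.
elim => [|C0 i k' _ [sg [tau [stau itau _ sub E]]] Hd IH] nil K cK fire S sS.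
  exists set0; first by rewrite inE.
  apply/setP => x; rewrite !inE; case xS: (x \in S) => //.
  have [c] := fire x (subsetP sS x xS); rewrite inE => /eqP ->; by rewrite inE.
have Dsub : delete C0 i \subset C0.
  by apply/subsetP => c cd; rewrite E inE cd.
have wi : forall c, c \in C0 -> i \in c -> (sg \subset c) && (c \subset i |: tau).
  move=> c; rewrite E inE => /orP[/imsetP [d _ ->]|].
    by rewrite in_setD1 eqxx.
  rewrite inE => /andP[s1 s2] _; rewrite s2 andbT.
  by apply: subset_trans s1; apply: subsetU1.
case iK: (i \in K); last first.
  have [||c' c'd c'K] := IH (kip_nil Hd) K _ _ S sS.
  - move=> x y xK yK nxy; apply: Gedge_delete; last exact: cK.
    + by apply/eqP => exi; rewrite -exi xK in iK.
    + by apply/eqP => exi; rewrite -exi yK in iK.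
  - move=> j jK; have [c cC jc] := fire j jK; exists (c :\ i); first exact: imset_f.
    rewrite in_setD1 jc andbT; apply/eqP => eji; by rewrite -eji jK in iK.
  by exists c'; first exact: (subsetP Dsub).
have [ci ciC ici] := fire i iK.
have Kt : forall j, j \in K -> j != i -> (j \in tau) && (j \notin sg).
  move=> j jK nji; have G := cK i j iK jK (ltac:(by rewrite eq_sym)).
  case: G => nij NG.
  have [cj cjC jcj] := fire j jK.
  apply/andP; split.
    apply/negPn/negP => jt; apply: NG.
    have dd : [disjoint [set i; j] & set0] by rewrite disjoint_sym disj0.
    exists [set i; j], set0; split => //; split; first by rewrite setU0.
    apply/(CF_char _ dd); split.
      move=> c cC; apply/negP => /andP[sc _].
      have ic := subsetP sc i (set21 i j); have jc := subsetP sc j (set22 i j).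
      have /andP[_ ct] := wi c cC ic.
      by move: (subsetP ct j jc); rewrite !inE (negbTE nji) (negbTE jt).
    move=> a' b' s1; rewrite subset0 => /eqP -> HB; split => //.
    apply/eqP; rewrite eqEsubset s1 /=; apply/subsetP => z; rewrite !inE.
    case/orP => /eqP ->; apply/negPn/negP => na.
    + apply: (BE_witness cjC _ (disj0 cj) HB); apply/subsetP => w wa.
      move: (subsetP s1 w wa); rewrite !inE => /orP[/eqP ewi|/eqP ->] //.
      by rewrite -ewi wa in na.
    + apply: (BE_witness ciC _ (disj0 ci) HB); apply/subsetP => w wa.
      move: (subsetP s1 w wa); rewrite !inE => /orP[/eqP ->|/eqP ewj] //.
      by rewrite -ewj wa in na.
  apply/negP => js; apply: NG.
  have dd : [disjoint [set i] & [set j]] by rewrite disjoints1 inE.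
  exists [set i], [set j]; split => //; split; first by apply/subsetP => z; rewrite !inE.
  apply/(CF_char _ dd); split.
    move=> c cC; rewrite sub1set disjoints1; apply/negP => /andP[ic jc].
    have /andP[sc _] := wi c cC ic.
    by rewrite (subsetP sc j js) in jc.
  move=> a' b' s1 s2 HB.
  move: s1; rewrite subset1 => /orP[/eqP Ea|/eqP a0]; last first.
    by exfalso; apply: (BE_witness nil _ _ HB); rewrite ?a0 ?sub0set //;
       apply/disjP => x _; rewrite inE.
  split => //; move: s2; rewrite subset1 => /orP[/eqP -> //|/eqP b0].
  by exfalso; apply: (BE_witness ciC _ _ HB); rewrite ?Ea ?b0 ?sub1set ?disj0.
case iS: (i \in S).
  exists (i |: (sg :|: (S :\ i))).
    rewrite E inE; apply/orP; right; rewrite inE; apply/andP; split.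
      by apply: setUS; apply: subsetUl.
    apply: setUS; rewrite subUset stau /=; apply/subsetP => z; rewrite !inE.
    case/andP => nzi zS; by have /andP[] := Kt z (subsetP sS z zS) nzi.
  apply/setP => z; rewrite !inE.
  case: (eqVneq z i) => [->|nzi]; first by rewrite ?eqxx iK iS ?orbT.
  rewrite /=; case zK: (z \in K); last first.
    rewrite andbF; apply/esym/negbTE/negP => /(subsetP sS); by rewrite zK.
  by rewrite andbT; have /andP[_ nzs] := Kt z zK nzi; rewrite (negbTE nzs).
exists (sg :|: S).
  apply: (subsetP Dsub); apply: (subsetP sub); rewrite inE subsetUl /= subUset stau /=.
  apply/subsetP => z zS; have zK := subsetP sS z zS.
  have nzi : z != i by apply/eqP => ezi; rewrite -ezi zS in iS.
  by have /andP[] := Kt z zK nzi.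
apply/setP => z; rewrite !inE.
case zK: (z \in K); last first.
  rewrite andbF; apply/esym/negbTE/negP => /(subsetP sS); by rewrite zK.
rewrite andbT; case: (eqVneq z i) => [->|nzi].
  by rewrite iS orbF; apply/negP => /(subsetP stau); rewrite (negbTE itau).
by have /andP[_ nzs] := Kt z zK nzi; rewrite (negbTE nzs).
Qed.

From mathcomp Require Import ring lra.

Definition dot k (u v : 'rV[R]_k) : R := \sum_j u 0 j * v 0 j.

Lemma dotC k (u v : 'rV[R]_k) : dot u v = dot v u.
Proof. by apply: eq_bigr => j _; rewrite mulrC. Qed.

Lemma dotDl k (u v w : 'rV[R]_k) : dot (u + v) w = dot u w + dot v w.
Proof. by rewrite /dot -big_split; apply: eq_bigr => j _; rewrite mxE mulrDl. Qed.

Lemma dotDr k (u v w : 'rV[R]_k) : dot w (u + v) = dot w u + dot w v.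
Proof. by rewrite dotC dotDl !(dotC w). Qed.

Lemma dotZl k a (u v : 'rV[R]_k) : dot (a *: u) v = a * dot u v.
Proof. by rewrite /dot mulr_sumr; apply: eq_bigr => j _; rewrite mxE mulrA. Qed.

Lemma dotZr k a (u v : 'rV[R]_k) : dot v (a *: u) = a * dot v u.
Proof. by rewrite dotC dotZl dotC. Qed.

Lemma dotNl k (u v : 'rV[R]_k) : dot (- u) v = - dot u v.
Proof. by rewrite -scaleN1r dotZl mulN1r. Qed.

Lemma dotNr k (u v : 'rV[R]_k) : dot v (- u) = - dot v u.
Proof. by rewrite dotC dotNl dotC. Qed.

Lemma dotBl k (u v w : 'rV[R]_k) : dot (u - v) w = dot u w - dot v w.
Proof. by rewrite dotDl dotNl. Qed.

Lemma dotBr k (u v w : 'rV[R]_k) : dot w (u - v) = dot w u - dot w v.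
Proof. by rewrite dotDr dotNr. Qed.

Lemma dot0r k (u : 'rV[R]_k) : dot u 0 = 0.
Proof. by rewrite /dot big1 // => j _; rewrite mxE mulr0. Qed.

Lemma dot_ge0 k (u : 'rV[R]_k) : 0 <= dot u u.
Proof. by apply: sumr_ge0 => j _; rewrite -expr2 sqr_ge0. Qed.

Lemma dot_eq0 k (u : 'rV[R]_k) : dot u u = 0 -> u = 0.
Proof.
move=> H; apply/matrixP => i j; rewrite mxE ord1.
have P : forall j : 'I_k, true -> 0 <= u 0 j * u 0 j by move=> l _; rewrite -expr2 sqr_ge0.
have := psumr_eq0P P H isT (i:=j).
by move/eqP; rewrite mulf_eq0 orbb => /eqP.
Qed.

Definition ee k n (c : 'I_n -> 'rV[R]_k) (r : 'I_n -> R) j := dot (c j) (c j) - r j ^+ 2.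
Definition pw k n (c : 'I_n -> 'rV[R]_k) (r : 'I_n -> R) j x :=
  dot x x - 2 * dot (c j) x + ee c r j.

Lemma sqdist_dot k (x y : 'rV[R]_k) : sqdist x y = dot (x - y) (x - y).
Proof. by rewrite /sqdist /dot; apply: eq_bigr => j _; rewrite !mxE expr2. Qed.

Lemma sqdist_pw k n (c : 'I_n -> 'rV[R]_k) r j x :
  sqdist x (c j) - r j ^+ 2 = pw c r j x.
Proof.
rewrite sqdist_dot /pw /ee !dotBl !dotBr (dotC x (c j)); ring.
Qed.

Lemma ball_pw k n (c : 'I_n -> 'rV[R]_k) r j x :
  open_ball (c j) (r j) x = (pw c r j x < 0).
Proof. by rewrite /open_ball -sqdist_pw subr_lt0. Qed.

Lemma sphere_pw k n (c : 'I_n -> 'rV[R]_k) r j x :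
  sphere (c j) (r j) x <-> pw c r j x = 0.
Proof.
rewrite /sphere -sqdist_pw; split => [->|/eqP]; first by rewrite subrr.
by rewrite subr_eq0 => /eqP.
Qed.

Lemma pw_shift k n (c : 'I_n -> 'rV[R]_k) r j x0 y :
  pw c r j (x0 + y) = dot y y + 2 * dot (x0 - c j) y + pw c r j x0.
Proof.
rewrite /pw !(dotDl, dotDr, dotNl, dotNr) ?(dotC y x0) ?(dotC y (c j)); ring.
Qed.

Lemma pw_diff k n (c : 'I_n -> 'rV[R]_k) r j s x :
  pw c r j x - pw c r s x = -2 * dot (c j - c s) x + (ee c r j - ee c r s).
Proof. rewrite /pw dotBl; ring. Qed.


Definition venn k n (c : 'I_n -> 'rV[R]_k) r (K : {set 'I_n}) :=
  forall S : {set 'I_n}, S \subset K ->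
    exists x : 'rV[R]_k, forall j, j \in K -> (pw c r j x < 0) = (j \in S).

Lemma VS k n (c : 'I_n -> 'rV[R]_k) r K (lam : 'I_n -> R) (Q : 'rV[R]_k -> R) L :
  venn c r K -> (exists2 j0, j0 \in K & lam j0 != 0) -> (forall x, 0 < Q x) ->
  (forall x, \sum_(j in K) lam j * pw c r j x = L * Q x) -> False.
Proof.
move=> V [j0 j0K l0] Qp HS.
have [x1 H1] := V [set j in K | 0 < lam j] (ltac:(by apply/subsetP => j; rewrite inE => /andP[])).
have [x2 H2] := V [set j in K | lam j < 0] (ltac:(by apply/subsetP => j; rewrite inE => /andP[])).
have t1 : forall j, j \in K -> lam j * pw c r j x1 <= 0.
  move=> j jK; have := H1 j jK; rewrite inE jK /=.
  case: (boolP (0 < lam j)) => hl hp.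
    have hp' : pw c r j x1 < 0 by rewrite hp.
    nra.
  have hp' : 0 <= pw c r j x1 by rewrite leNgt hp.
  have hl' : lam j <= 0 by rewrite leNgt.
  nra.
have t2 : forall j, j \in K -> 0 <= lam j * pw c r j x2.
  move=> j jK; have := H2 j jK; rewrite inE jK /=.
  case: (boolP (lam j < 0)) => hl hp.
    have hp' : pw c r j x2 < 0 by rewrite hp.
    nra.
  have hp' : 0 <= pw c r j x2 by rewrite leNgt hp.
  have hl' : 0 <= lam j by rewrite leNgt.
  nra.
have S1 : \sum_(j in K) lam j * pw c r j x1 <= 0 by apply: sumr_le0.
have S2 : 0 <= \sum_(j in K) lam j * pw c r j x2 by apply: sumr_ge0.
rewrite !HS in S1 S2.
have Q1 := Qp x1; have Q2 := Qp x2.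
case: (boolP (0 < lam j0)) => hl.
  have : \sum_(j in K) lam j * pw c r j x1 < 0.
    rewrite (bigD1 j0) //=.
    have a1 : lam j0 * pw c r j0 x1 < 0.
      have := H1 j0 j0K; rewrite inE j0K hl => hp.
      have hp' : pw c r j0 x1 < 0 by rewrite hp.
      nra.
    have a2 : \sum_(j in K | j != j0) lam j * pw c r j x1 <= 0.
      by apply: sumr_le0 => j /andP[jK _]; apply: t1.
    lra.
  rewrite HS => h; nra.
have hl' : lam j0 < 0 by rewrite lt_neqAle l0 leNgt hl.
have : 0 < \sum_(j in K) lam j * pw c r j x2.
  rewrite (bigD1 j0) //=.
  have a1 : 0 < lam j0 * pw c r j0 x2.
    have := H2 j0 j0K; rewrite inE j0K hl' => hp.
    have hp' : pw c r j0 x2 < 0 by rewrite hp.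
    nra.
  have a2 : 0 <= \sum_(j in K | j != j0) lam j * pw c r j x2.
    by apply: sumr_ge0 => j /andP[jK _]; apply: t2.
  lra.
rewrite HS => h; nra.
Qed.

Definition mxof k n (K : {set 'I_n}) (g : 'I_n -> 'rV[R]_k) : 'M[R]_(#|K|, k) :=
  \matrix_(i < #|K|, l < k) g (enum_val i) 0 l.

Lemma DEP k n (K : {set 'I_n}) (g : 'I_n -> 'rV[R]_k) :
  ~~ row_free (mxof K g) -> exists lam : 'I_n -> R,
    (exists2 j, j \in K & lam j != 0) /\ forall l, \sum_(j in K) lam j * g j 0 l = 0.
Proof.
move=> nf.
have : (0 < #|K|)%nat.
  rewrite lt0n; apply: contra nf => /eqP K0; rewrite /row_free eqn_leq rank_leq_row /=.
  by rewrite [X in (X <= _)%nat]K0.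
rewrite card_gt0 => /set0Pn [x0 x0K].
move: nf; rewrite -kermx_eq0 => /rowV0Pn [u /sub_kermxP uM u0].
exists (fun j => u 0 (enum_rank_in x0K j)); split.
  have [i ui] : exists i, u 0 i != 0.
    apply/existsP; apply: contraR u0 => /existsPn H; apply/eqP/matrixP => a i.
    by rewrite ord1 mxE; apply/eqP; move: (H i); rewrite negbK.
  by exists (enum_val i); [exact: enum_valP | rewrite enum_valK_in].
move=> l; rewrite (big_enum_val (fun j => u 0 (enum_rank_in x0K j) * g j 0 l)) /=.
transitivity ((u *m mxof K g) 0 l); last by rewrite uM mxE.
by rewrite mxE; apply: eq_bigr => i _; rewrite enum_valK_in mxE.
Qed.

Lemma DEP_card k n (K : {set 'I_n}) (g : 'I_n -> 'rV[R]_k) :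
  (k < #|K|)%nat -> ~~ row_free (mxof K g).
Proof.
move=> kK; apply/negP => /eqP E; have := rank_leq_col (mxof K g).
by rewrite E leqNgt kK.
Qed.

Lemma SOLVE k n (K : {set 'I_n}) (g : 'I_n -> 'rV[R]_k) :
  row_free (mxof K g) -> forall b : 'I_n -> R,
  exists x : 'rV[R]_k, forall j, j \in K -> dot (g j) x = b j.
Proof.
move=> rf b.
have rfT : row_full (mxof K g)^T by rewrite /row_full mxrank_tr.
have := submx_full (\row_(i < #|K|) b (enum_val i)) rfT.
case/submxP => D E; exists D => j jK.
have := congr1 (fun M : 'M_(1, #|K|) => M 0 (enum_rank_in jK j)) E.
rewrite !mxE enum_rankK_in // => ->; rewrite /dot.
by apply: eq_bigr => l _; rewrite !mxE enum_rankK_in // mulrC.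
Qed.

Lemma UNIQ k n (K : {set 'I_n}) (g : 'I_n -> 'rV[R]_k) :
  row_free (mxof K g) -> #|K| = k ->
  forall x : 'rV[R]_k, (forall j, j \in K -> dot (g j) x = 0) -> x = 0.
Proof.
move=> rf E x H.
have rfT : row_free (mxof K g)^T by rewrite /row_free mxrank_tr (eqP rf) E.
have : x *m (mxof K g)^T = 0.
  apply/matrixP => a i; rewrite ord1 !mxE -[RHS](H (enum_val i) (enum_valP i)).
  by apply: eq_bigr => l _; rewrite !mxE mulrC.
by move/eqP; rewrite mulmx_free_eq0 // => /eqP.
Qed.

Lemma sum_dot0 k n (K : {set 'I_n}) (lam : 'I_n -> R) (g : 'I_n -> 'rV[R]_k) :
  (forall l, \sum_(j in K) lam j * g j 0 l = 0) ->
  forall x, \sum_(j in K) lam j * dot (g j) x = 0.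
Proof.
move=> H x; rewrite /dot; under eq_bigr do rewrite mulr_sumr.
rewrite exchange_big /=; apply: big1 => l _.
transitivity ((\sum_(j in K) lam j * g j 0 l) * x 0 l); last by rewrite H mul0r.
by rewrite mulr_suml; apply: eq_bigr => j _; rewrite mulrA.
Qed.

Lemma radical k n (c : 'I_n -> 'rV[R]_k) r (K : {set 'I_n}) s0 :
  venn c r K -> s0 \in K -> (k < #|K|)%nat ->
  (~ exists x, forall j, j \in K -> pw c r j x = 0) ->
  row_free (mxof (K :\ s0) (fun j => c j - c s0)) /\
  exists x0, (forall j, j \in K :\ s0 -> dot (c j - c s0) x0 = (ee c r j - ee c r s0) / 2)
             /\ pw c r s0 x0 < 0.
Proof.
move=> V s0K kK noS.
set K' := K :\ s0; set y := fun j => c j - c s0.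
have splitK : forall F : 'I_n -> R, \sum_(j in K) F j = F s0 + \sum_(j in K') F j.
  move=> F; rewrite (bigD1 s0) //=; congr (_ + _).
  by apply: eq_bigl => j; rewrite /K' in_setD1 andbC.
have RF : row_free (mxof K' y).
  apply/negPn/negP => /DEP [lam' [[j1 j1K' l1] H]].
  pose lam j := if j == s0 then - \sum_(i in K') lam' i else lam' j.
  apply: (VS (lam := lam) (Q := fun _ => 1) (L := \sum_(j in K') lam' j * (ee c r j - ee c r s0)) V).
  - exists j1; first by move: j1K'; rewrite in_setD1 => /andP[].
    by move: j1K'; rewrite /lam in_setD1 => /andP[/negbTE -> _].
  - by move=> _; exact: ltr01.
  move=> x; rewrite mulr1 splitK /lam eqxx.
  have -> : \sum_(j in K') (if j == s0 then - \sum_(i in K') lam' i else lam' j) * pw c r j x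
          = \sum_(j in K') lam' j * pw c r j x.
    apply: eq_bigr => j; rewrite /K' in_setD1 => /andP[/negbTE -> _] //.
  have Z := sum_dot0 H x.
  have E : \sum_(j in K') lam' j * pw c r j x =
      \sum_(j in K') lam' j * pw c r s0 x +
      (-2 * \sum_(j in K') lam' j * dot (y j) x + \sum_(j in K') lam' j * (ee c r j - ee c r s0)).
    rewrite mulr_sumr -!big_split /=; apply: eq_bigr => j _.
    have := pw_diff c r j s0 x; rewrite -/(y j) => D.
    have -> : pw c r j x = pw c r s0 x + (-2 * dot (y j) x + (ee c r j - ee c r s0)).
      by rewrite -D addrC subrK.
    ring.
  rewrite E Z -mulr_suml; ring.
split => //.
have [x0 Hx0] := SOLVE RF (fun j => (ee c r j - ee c r s0) / 2).
exists x0; split => //.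
set P := pw c r s0 x0.
have allP : forall j, j \in K -> pw c r j x0 = P.
  move=> j jK; case: (eqVneq j s0) => [-> //|njs].
  have jK' : j \in K' by rewrite in_setD1 njs.
  have := pw_diff c r j s0 x0; rewrite (Hx0 j jK') => D.
  have : pw c r j x0 - P = 0 by rewrite /P D; field.
  by move/eqP; rewrite subr_eq0 => /eqP.
have P0 : P != 0.
  apply/eqP => P0; apply: noS; exists x0 => j jK; by rewrite allP.
case: (ltrgt0P P) => // Ppos; last by rewrite Ppos eqxx in P0.
exfalso.
have [lam [[j1 j1K l1] H]] := DEP (DEP_card (fun j => x0 - c j) kK).
apply: (VS (lam := lam) (Q := fun x => dot (x - x0) (x - x0) + P)
           (L := \sum_(j in K) lam j) V).
- by exists j1.
- by move=> x; have := dot_ge0 (x - x0); lra.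
move=> x.
have Z := sum_dot0 H (x - x0).
have Ex : x = x0 + (x - x0) by rewrite addrC subrK.
transitivity (\sum_(j in K) (lam j * (dot (x - x0) (x - x0) + P) + 2 * (lam j * dot (x0 - c j) (x - x0)))).
  apply: eq_bigr => j jK; rewrite {1}Ex pw_shift (allP j jK); ring.
by rewrite big_split /= -mulr_sumr Z -mulr_suml; ring.
Qed.

Lemma cardK k n (s : {set 'I_n}) b s0 : #|s| = k -> b \notin s -> s0 \in s ->
  #|b |: s| = k.+1 /\ #|(b |: s) :\ s0| = k.
Proof.
move=> sk bs s0s; have E1 : #|b |: s| = k.+1 by rewrite cardsU1 bs sk.
split => //; have := cardsD1 s0 (b |: s); rewrite E1 inE s0s orbT /= add1n.
by case.
Qed.

Lemma sides k n (c : 'I_n -> 'rV[R]_k) r (s : {set 'I_n}) s0 (att : 'I_n -> Prop) a0 :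
  s0 \in s -> #|s| = k -> att a0 ->
  (forall b, att b -> [/\ b \notin s, venn c r (b |: s) &
      ~ exists x, forall j, j \in b |: s -> pw c r j x = 0]) ->
  exists p q : 'rV[R]_k, forall b, att b -> (pw c r b p < 0) = ~~ (pw c r b q < 0).
Proof.
move=> s0s sk att0 Hatt.
set y := fun j => c j - c s0.
have Rad : forall b, att b -> [/\ b \notin s, #|(b |: s) :\ s0| = k,
      row_free (mxof ((b |: s) :\ s0) y) &
      exists x0, (forall j, j \in (b |: s) :\ s0 -> dot (y j) x0 = (ee c r j - ee c r s0) / 2)
             /\ pw c r s0 x0 < 0].
  move=> b ab; have [bs V nS] := Hatt b ab.
  have [C1 C2] := cardK sk bs s0s.
  have s0K : s0 \in b |: s by rewrite inE s0s orbT.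
  have kK : (k < #|b |: s|)%nat by rewrite C1.
  have [RF [x0 [H1 H2]]] := @radical k n c r (b |: s) s0 V s0K kK nS.
  by split => //; exists x0.
have memK' : forall b j, j \in (b |: s) :\ s0 = (j != s0) && ((j == b) || (j \in s)).
  by move=> b j; rewrite !inE.
have [a0s C0 RF0 [X [HX PX]]] := Rad a0 att0.
have [d Hd] := SOLVE RF0 (fun j => (j == a0)%:R).
have a0ns0 : a0 != s0 by apply/eqP => e; rewrite e s0s in a0s.
have da0 : dot (y a0) d = 1 by rewrite Hd ?eqxx // memK' eqxx a0ns0.
have dj : forall j, j \in s :\ s0 -> dot (y j) d = 0.
  move=> j; rewrite in_setD1 => /andP[js0 js]; rewrite Hd; last by rewrite memK' js0 js orbT.
  have -> : (j == a0) = false by apply/eqP => e; rewrite -e js in a0s.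
  by [].
have Dpos : 0 < dot d d.
  rewrite lt_neqAle dot_ge0 andbT; apply/eqP => E.
  by move: da0; rewrite (dot_eq0 (esym E)) dot0r => /eqP; rewrite eq_sym oner_eq0.
set D := dot d d; set B := dot (X - c s0) d; set P0 := pw c r s0 X.
have DposD : 0 < D := Dpos.
have qE : forall l, pw c r s0 (X + l *: d) = D * l ^+ 2 + 2 * B * l + P0.
  by move=> l; rewrite pw_shift dotZl !dotZr -/D -/B -/P0; ring.
have Hb : forall b, att b -> exists mu t, [/\ t != 0, pw c r s0 (X + mu *: d) < 0 &
    forall l, pw c r b (X + l *: d) = pw c r s0 (X + l *: d) - 2 * t * (l - mu)].
  move=> b ab; have [bs Cb RFb [xb [Hxb Pxb]]] := Rad b ab.
  set u := xb - X.
  have uz : forall j, j \in s :\ s0 -> dot (y j) u = 0.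
    move=> j; rewrite in_setD1 => /andP[js0 js].
    rewrite /u dotBr Hxb ?HX ?subrr // memK' js0 js orbT //.
  set mu := dot (y a0) u.
  have xbE : xb = X + mu *: d.
    have : u - mu *: d = 0.
      apply: (UNIQ RF0 C0) => j; rewrite memK' => /andP[js0 /orP[/eqP ->|js]].
        by rewrite dotBr dotZr da0 mulr1 subrr.
      have js' : j \in s :\ s0 by rewrite in_setD1 js0 js.
      by rewrite dotBr dotZr (dj j js') (uz j js') mulr0 subrr.
    by move/eqP; rewrite subr_eq0 => /eqP <-; rewrite /u addrC subrK.
  set t := dot (y b) d.
  have bK : b \in (b |: s) :\ s0.
    rewrite memK' eqxx andbT; apply/eqP => e; by rewrite e s0s in bs.
  exists mu, t; split.
  - apply/eqP => t0; have d0 : d = 0.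
      apply: (UNIQ RFb Cb) => j; rewrite memK' => /andP[js0 /orP[/eqP ->|js]] //.
      by apply: dj; rewrite in_setD1 js0 js.
    by move: da0; rewrite d0 dot0r => /eqP; rewrite eq_sym oner_eq0.
  - by rewrite -xbE.
  move=> l; have E := pw_diff c r b s0 (X + l *: d); rewrite -/(y b) in E.
  have := Hxb b bK; rewrite xbE !dotDr !dotZr -/t => Eb.
  transitivity (pw c r s0 (X + l *: d) + (pw c r b (X + l *: d) - pw c r s0 (X + l *: d))).
    by ring.
  rewrite E dotDr dotZr -/t.
  have -> : ee c r b - ee c r s0 = 2 * (dot (y b) X + mu * t) by rewrite Eb; field.
  ring.
have P0neg : P0 < 0 by [].
set De := B ^+ 2 - D * P0.
have Dep : 0 < De.
  have h1 : 0 < D * (- P0) by apply: mulr_gt0; rewrite // oppr_gt0.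
  have h2 := sqr_ge0 B; rewrite /De; lra.
set sq := Num.sqrt De.
have sqp : 0 < sq by rewrite /sq sqrtr_gt0.
have sq2 : sq ^+ 2 = De by rewrite /sq sqr_sqrtr // ltW.
have D0 : D != 0 by rewrite gt_eqF.
set lm := (- B - sq) / D; set lp := (- B + sq) / D.
have hlm : D * lm = - B - sq by rewrite /lm; field.
have hlp : D * lp = - B + sq by rewrite /lp; field.
have root : forall l, D * l = - B - sq \/ D * l = - B + sq -> D * l ^+ 2 + 2 * B * l + P0 = 0.
  move=> l hl; apply/eqP; rewrite -(mulIr_eq0 _ (mulIf D0)) ?D0 //.
  apply/eqP; transitivity ((D * l) ^+ 2 + 2 * B * (D * l) + D * P0); first by ring.
  have sq2' : sq ^+ 2 = B ^+ 2 - D * P0 by [].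
  by case: hl => ->; (transitivity (sq ^+ 2 - (B ^+ 2 - D * P0)); [ring | rewrite sq2' subrr]).
exists (X + lm *: d), (X + lp *: d) => b ab.
have [mu [t [t0 qmu Hl]]] := Hb b ab.
rewrite !Hl !qE !root; [|by right|by left].
rewrite qE in qmu.
have z2 : (D * mu + B) ^+ 2 < sq ^+ 2.
  rewrite sq2 /De; have h := mulr_gt0 Dpos (ltac:(rewrite oppr_gt0; exact: qmu) : 0 < - (D * mu ^+ 2 + 2 * B * mu + P0)).
  have E : (D * mu + B) ^+ 2 = B ^+ 2 - D * P0 - D * - (D * mu ^+ 2 + 2 * B * mu + P0) by ring.
  by rewrite E gtrBl.
set z := D * mu + B.
have z1 : z < sq.
  rewrite ltNge; apply/negP => hz; move: z2; rewrite ltNge => /negP; apply.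
  by rewrite !expr2 ler_pM // ltW.
have z3 : - sq < z.
  rewrite ltNge; apply/negP => hz; move: z2; rewrite ltNge => /negP; apply.
  have hz' : sq <= - z by rewrite lerNr.
  by rewrite -(sqrrN z) !expr2 ler_pM // ltW.
have m1 : lm < mu.
  rewrite -(ltr_pM2l DposD) hlm; rewrite /z in z3; lra.
have m2 : mu < lp.
  rewrite -(ltr_pM2l DposD) hlp; rewrite /z in z1; lra.
rewrite !add0r.
have l1 : lm - mu < 0 by rewrite subr_lt0.
have l2 : 0 < lp - mu by rewrite subr_gt0.
have := t0; rewrite neq_lt => /orP[ht|ht].
  have h1 : 0 < t * (lm - mu) by nra.
  have h2 : t * (lp - mu) < 0 by nra.
  have -> : (- (2 * t * (lm - mu)) < 0) = true by apply/idP; lra.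
  have -> : (- (2 * t * (lp - mu)) < 0) = false by apply/negbTE; rewrite -leNgt; lra.
  by [].
have h1 : t * (lm - mu) < 0 by nra.
have h2 : 0 < t * (lp - mu) by nra.
have -> : (- (2 * t * (lm - mu)) < 0) = false by apply/negbTE; rewrite -leNgt; lra.
have -> : (- (2 * t * (lp - mu)) < 0) = true by apply/idP; lra.
by [].
Qed.

From Stdlib Require Import Classical ClassicalEpsilon.

Definition pb (P : Prop) : bool := if excluded_middle_informative P then true else false.

Lemma pbP (P : Prop) : reflect P (pb P).
Proof. by rewrite /pb; case: excluded_middle_informative => H; constructor. Qed.

Lemma ss_helper n (C : code n) (al be : {set 'I_n}) u v :
  set0 \in C -> BE C al be -> [disjoint al & be] -> al :|: be \subset [set u; v] ->
  u \in be -> al = [set v] /\ be = [set u].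
Proof.
move=> nilC HB d sub ube.
have ual : u \in al = false := disjointFl d ube.
have : ~~ (al \subset set0) by have := HB set0 nilC; rewrite disjoint_sym disj0 andbT.
rewrite subset0 => /set0Pn [y yal].
have mem : forall z, z \in al :|: be -> (z == u) || (z == v).
  by move=> z /(subsetP sub); rewrite !inE.
have yv : y = v.
  have := mem y; rewrite inE yal => /(_ isT) /orP[/eqP yu|/eqP //].
  by rewrite yu ual in yal.
subst y.
have vbe : v \in be = false := disjointFr d yal.
split; apply/setP => z; rewrite inE; apply/idP/eqP.
- move=> zal; have := mem z; rewrite inE zal => /(_ isT) /orP[/eqP zu|/eqP //].
  by rewrite zu ual in zal.
- by move=> ->.
- move=> zbe; have := mem z; rewrite inE zbe orbT => /(_ isT) /orP[/eqP // | /eqP zv].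
  by rewrite zv vbe in zbe.
- by move=> ->.
Qed.

Lemma same_side n (C : code n) (W : {set 'I_n}) a a' :
  W \in C -> set0 \in C -> a \in W -> a' \in W -> a != a' -> ~ Gedge C a a' ->
  Pcomparable C a a'.
Proof.
move=> WC nilC aW a'W naa nG.
have [al [be [d [sub cf]]]] : exists al be : {set 'I_n},
    [disjoint al & be] /\ (al :|: be \subset [set a; a']) /\ in_CF C (pmono al be).
  by apply: NNPP => H; apply: nG; split.
have HB : BE C al be by case: ((CF_char _ d).1 cf).
have alW : al \subset W.
  apply: subset_trans (subsetUl al be) _; apply: subset_trans sub _.
  by apply/subsetP => z; rewrite !inE => /orP[] /eqP ->.
have : ~~ [disjoint be & W] by have := HB W WC; rewrite alW.
rewrite -setI_eq0 => /set0Pn [x]; rewrite inE => /andP[xbe xW].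
have := subsetP sub x; rewrite inE xbe orbT => /(_ isT); rewrite !inE => /orP[/eqP xa|/eqP xa'].
  subst x; have [Ea Eb] := ss_helper nilC HB d sub xbe.
  by rewrite Ea Eb in cf; right; split => //; rewrite eq_sym.
subst x.
have sub' : al :|: be \subset [set a'; a].
  by apply: subset_trans sub _; apply/subsetP => z; rewrite !inE orbC.
have [Ea Eb] := ss_helper nilC HB d sub' xbe.
by rewrite Ea Eb in cf; left; split.
Qed.

Lemma clique_add n (C : code n) s b : clique C s -> attaching_set C s b -> clique C (b |: s).
Proof.
move=> cs [bs Hb] x y; rewrite !inE => /orP[/eqP->|xs] /orP[/eqP->|ys] nxy.
- by rewrite eqxx in nxy.
- exact: Hb.
- exact/Gedge_sym/Hb.
- exact: cs.
Qed.

Theorem lemma3p6 (n k : nat) (C : code n) :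
  code_conventions C ->
  ind_pierced C ->
  max_clique_size C k.+1 ->
  has_wf_ball_realization k C ->
  splittable k C.
Proof.
move=> [nilC fire _] [k0 HIP] [_ maxc] [c [r [rpos [[_ WF2] real]]]] s cs sk.
case: (classic (exists a0, attaching_set C s a0)) => [[a0 att0]|noatt]; last first.
  exists set0, set0; split.
  - move=> i; split => [ai|]; first by exfalso; apply: noatt; exists i.
    by rewrite !inE.
  - by rewrite disj0.
  - by move=> a; rewrite inE.
  - by move=> a; rewrite inE.
  - by move=> a; rewrite inE.
have noi : k = 0%nat -> forall i : 'I_n, False.
  move=> k0' i; have [x [_ Hx]] := (real set0).1 nilC.
  apply: (Hx i); first by rewrite inE.
  clear Hx; rewrite /open_ball /sqdist; move: (c i) x; rewrite k0' => ci x.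
  by rewrite big_ord0 exprn_gt0 // rpos.
case: (eqVneq k 0%nat) => [k0'|kn0]; first by case: (noi k0' a0).
have [s0 s0s] : exists s0, s0 \in s.
  have : (0 < #|s|)%nat by rewrite sk lt0n.
  by rewrite card_gt0 => /set0Pn.
pose att := attaching_set C s.
have Katt : forall b, att b -> [/\ b \notin s, venn c r (b |: s) &
      ~ exists x, forall j, j \in b |: s -> pw c r j x = 0].
  move=> b ab; have bs := proj1 ab; split => //.
    move=> S sS; have cK := clique_add cs ab.
    have [cw cwC cwK] := kip_venn HIP cK (fun j _ => fire j) sS.
    have [x [Hin Hout]] := (real cw).1 cwC.
    exists x => j jK; rewrite -cwK inE jK andbT.
    case: (boolP (j \in cw)) => jc.
      by apply/idP; move: (Hin j jc); rewrite ball_pw.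
    by apply/negbTE/negP => H; apply: (Hout j jc); rewrite ball_pw.
  move=> [x Hx]; have [C1 _] := cardK sk bs s0s.
  by apply: (WF2 (b |: s) C1 x) => j jK; apply/sphere_pw; exact: Hx.
have [p [q Hpq]] := @sides k n c r s s0 att a0 s0s sk att0 Katt.
have WC : forall x, [set j | pw c r j x < 0] \in C.
  move=> x; apply/(real _).2; exists x; split => [i|j]; rewrite inE ?ball_pw //.
  by move/negP.
have nG : forall a a', att a -> att a' -> a != a' -> ~ Gedge C a a'.
  move=> a a' aa aa' naa G.
  have cK : clique C (a |: (a' |: s)).
    apply: clique_add (clique_add cs aa') _; split.
      by rewrite !inE negb_or naa (proj1 aa).
    move=> j; rewrite !inE => /orP[/eqP->|js]; [exact: G | exact: (proj2 aa) j js].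
  have := maxc _ cK.
  have na : a \notin a' |: s by rewrite !inE negb_or naa (proj1 aa).
  by rewrite cardsU1 na cardsU1 (proj1 aa') sk /= !add1n ltnn.
exists [set b | pb (att b) && (pw c r b p < 0)], [set b | pb (att b) && (pw c r b q < 0)].
split.
- move=> i; split => [ai|]; rewrite !inE.
    have E := Hpq i ai; have -> : pb (att i) by apply/pbP.
    rewrite /=; case hp: (pw c r i p < 0) => //=.
    by move: E; rewrite hp; case: (pw c r i q < 0).
  by case/orP => /andP[/pbP ai _].
- apply/disjP => x; rewrite !inE => /andP[/pbP ax px] /andP[_ qx].
  by have := Hpq x ax; rewrite px qx.
- move=> a a'; rewrite !inE => /andP[/pbP aa pa] /andP[/pbP aa' pa'] naa.
  by apply: (same_side (WC p) nilC) => //; [rewrite inE | rewrite inE | exact: nG].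
- move=> a a'; rewrite !inE => /andP[/pbP aa pa] /andP[/pbP aa' pa'] naa.
  by apply: (same_side (WC q) nilC) => //; [rewrite inE | rewrite inE | exact: nG].
move=> a b; rewrite !inE => /andP[/pbP aa pa] /andP[/pbP bb qb] [[nab cf]|[nba cf]].
  have pbq : (pw c r b p < 0) = false by rewrite (Hpq b bb) qb.
  have d : [disjoint [set a] & [set b]] by rewrite disjoints1 inE.
  have [HB _] := (CF_char _ d).1 cf.
  by apply: (BE_witness (WC p) _ _ HB); rewrite ?sub1set ?disjoints1 !inE ?pa ?pbq.
have qaq : (pw c r a q < 0) = false by apply/negbTE; rewrite -(Hpq a aa) pa.
have d : [disjoint [set b] & [set a]] by rewrite disjoints1 inE.
have [HB _] := (CF_char _ d).1 cf.
by apply: (BE_witness (WC q) _ _ HB); rewrite ?sub1set ?disjoints1 !inE ?qb ?qaq.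
Qed.
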